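(* Let $\pi\colon\mathsf{States}\to\mathbb{R}_{\ge0}$ be a potential function. Then $\mathsf{aert}_\pi$ is $\omega$-continuous: for every program $C$ and every $\omega$-chain $F=\{X_1\preceq X_2\preceq\cdots\}$ in $\mathbb{A}_\pi$, $$\mathsf{aert}_\pi[\![C]\!](\sup F)\;=\;\sup\{\mathsf{aert}_\pi[\![C]\!](X)\mid X\in F\}.$$
   Context: States and programs. Fix a finite set $\mathrm{Vars}$ of variables; values are $\mathbb{N}$, locations are $\mathbb{N}_{>0}$. A stack is $s\colon \mathrm{Vars}\to\mathbb{N}$; a heap is a partial map $h$ from a finite set $\mathrm{dom}(h)\subseteq\mathbb{N}_{>0}$ to $\mathbb{N}$. $h_1\perp h_2$ means disjoint domains; then $h_1\star h_2$ is their union; $h_\emptyset$ is the empty heap. $\mathsf{States}$ is the set of pairs $(s,h)$. $s(e)$ is the value of a (heap-independent) arithmetic expression $e$ under $s$, $s\models\varphi$ means the Boolean expression $\varphi$ holds under $s$, $s[x\mapsto v]$ is the updated stack. Programs are generated by $C ::= \mathtt{tick}(e) \mid x:=e \mid x:=\mathtt{alloc}(e) \mid \langle e\rangle:=e' \mid x:=\langle e\rangle \mid \mathtt{free}(e) \mid \{C\}[p]\{C\} \mid \mathtt{if}(\varphi)\{C\}\mathtt{else}\{C\} \mid C;C \mid \mathtt{while}(\varphi)\{C\}$, where $p$ is an expression with $s(p)\in[0,1]\cap\mathbb{Q}$ for all $s$. The statements other than tick, probabilistic choice, conditional, sequencing and loops are called atomic. Runtimes. $\mathbb{T}$ is the set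 of functions $\mathsf{States}\to[0,\infty]$, ordered pointwise by $\preceq$; arithmetic is pointwise with $0\cdot\infty=0$. $[\varphi]$ is the $0/1$-valued Iverson bracket. Truncated subtraction: $a\dot- b=\max(a-b,0)$, $\infty\dot- b=\infty$ for finite $b$, $a\dot-\infty=0$. $(f\oplus g)(s,h)=\min\{f(s,h_1)+g(s,h_2)\mid h=h_1\star h_2\}$; $(f \mathbin{-\!\!\ominus} g)(s,h)=\sup\{g(s,h\star h')\dot- f(s,h')\mid h'\perp h\}$; $(\inf y\colon f)(s,h)=\inf_{v\in\mathbb{N}} f(s[y\mapsto v],h)$, $(\sup y\colon f)(s,h)=\sup_{v\in\mathbb{N}}f(s[y\mapsto v],h)$; $f[x/e](s,h)=f(s[x\mapsto s(e)],h)$. $\mathsf{tm}(e)(s,h)=s(e)$ if $h=h_\emptyset$, else $\infty$; $[e\mapsto e'](s,h)=0$ if $\mathrm{dom}(h)=\{s(e)\}$ and $h(s(e))=s(e')$, else $\infty$; $[e\mapsto -](s,h)=0$ if $\mathrm{dom}(h)=\{s(e)\}$, else $\infty$; $\bigoplus_{i=1}^{e} f_i$ is the separating sum over $i=1,\dots,s(e)$ (empty one: $[\mathsf{emp}]$, which is $0$ if $h=h_\emptyset$, else $\infty$). $\mathsf{ert}[\![C]\!]\colon\mathbb{T}\to\mathbb{T}$ (with $v$ fresh): $\mathsf{ert}[\![\mathtt{tick}(e)]\!](f)=\mathsf{tm}(e)\oplus f$; $\mathsf{ert}[\![x:=e]\!](f)=f[x/e]$; $\mathsf{ert}[\![x:=\mathtt{alloc}(e)]\!](f)=\sup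 v\colon (\bigoplus_{i=1}^{e}[v+i-1\mapsto 0])\mathbin{-\!\!\ominus} f[x/v]$; $\mathsf{ert}[\![\langle e\rangle:=e']\!](f)=[e\mapsto-]\oplus([e\mapsto e']\mathbin{-\!\!\ominus} f)$; $\mathsf{ert}[\![x:=\langle e\rangle]\!](f)=\inf v\colon [e\mapsto v]\oplus([e\mapsto v]\mathbin{-\!\!\ominus} f[x/v])$; $\mathsf{ert}[\![\mathtt{free}(e)]\!](f)=[e\mapsto-]\oplus f$; $\mathsf{ert}[\![C_1;C_2]\!](f)=\mathsf{ert}[\![C_1]\!](\mathsf{ert}[\![C_2]\!](f))$; conditional: $[\varphi]\cdot\mathsf{ert}[\![C_1]\!](f)+[\neg\varphi]\cdot\mathsf{ert}[\![C_2]\!](f)$; probabilistic choice: $p\cdot\mathsf{ert}[\![C_1]\!](f)+(1-p)\cdot\mathsf{ert}[\![C_2]\!](f)$; $\mathsf{ert}[\![\mathtt{while}(\varphi)\{C\}]\!](f)=\mathrm{lfp}\, g.\ [\neg\varphi]\cdot f+[\varphi]\cdot\mathsf{ert}[\![C]\!](g)$. Amortized runtimes. A potential function is $\pi\colon\mathsf{States}\to\mathbb{R}_{\ge0}$. $\mathbb{A}_\pi=\{X\colon\mathsf{States}\to\mathbb{R}\cup\{\infty\}\mid -\pi\le X\}$, ordered pointwise by $\preceq$ (complete lattice, least element $-\pi$; suprema are pointwise). $\mathsf{aert}_\pi[\![C]\!]\colon\mathbb{A}_\pi\to\mathbb{A}_\pi$: $\mathsf{aert}_\pi[\![\mathtt{tick}(e)]\!](X)=e+X$;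 for atomic $C$ other than tick, $\mathsf{aert}_\pi[\![C]\!](X)=\mathsf{ert}[\![C]\!](X+\pi)-\pi$; sequencing by composition; conditional $[\varphi]\cdot\mathsf{aert}_\pi[\![C_1]\!](X)+[\neg\varphi]\cdot\mathsf{aert}_\pi[\![C_2]\!](X)$; probabilistic choice $p\cdot\mathsf{aert}_\pi[\![C_1]\!](X)+(1-p)\cdot\mathsf{aert}_\pi[\![C_2]\!](X)$; $\mathsf{aert}_\pi[\![\mathtt{while}(\varphi)\{C'\}]\!](X)=\mathrm{lfp}\,Y.\ [\neg\varphi]\cdot X+[\varphi]\cdot\mathsf{aert}_\pi[\![C']\!](Y)$ in $(\mathbb{A}_\pi,\preceq)$. *)

(* Defs.v *)
From HB Require Import structures.
From mathcomp Require Import all_boot all_order all_algebra.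
From mathcomp Require Import finmap.
From mathcomp Require Import all_classical all_reals ereal.
Set Implicit Arguments.
Unset Strict Implicit.
Unset Printing Implicit Defensive.
Import Order.TTheory GRing.Theory Num.Theory.
Local Open Scope classical_set_scope.
Local Open Scope ereal_scope.

Section Semantics.
Variable R : realType.
Variable Vars : finType.

Definition stack := Vars -> nat.
Definition heap := {h : {fmap nat -> nat} | 0%N \notin domf h}.
Definition state := (stack * heap)%type.

Definition aexpr := stack -> nat.
Definition bexpr := stack -> bool.
Definition prob := {q : rat | ((0 <= q) && (q <= 1))%R}.
Definition pexpr := stack -> prob.

Definition upd (s : stack) (x : Vars) (v : nat) : stack :=
  fun y => if y == x then v else s y.

Inductive prog : Type :=
| Tick of aexpr
| Assign of Vars & aexpr
| Alloc of Vars & aexpr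
| Store of aexpr & aexpr            (* <e> := e' *)
| Lookup of Vars & aexpr             (* x := <e> *)
| Free of aexpr
| PChoice of prog & pexpr & prog
| Ite of bexpr & prog & prog
| Seq of prog & prog
| While of bexpr & prog.

Definition fn := state -> \bar R.

Definition hdisj (h1 h2 : heap) : Prop :=
  forall l, l \in domf (val h1) -> l \notin domf (val h2).
Definition hsplit (h h1 h2 : heap) : Prop :=
  hdisj h1 h2 /\ val h = catf (val h1) (val h2).
Definition hemptyb (h : heap) : bool := domf (val h) == fset0.

Definition tsub (a b : \bar R) : \bar R :=
  if b == +oo then 0 else maxe (a - b) 0.

Definition iv (b : bool) : \bar R := if b then 1 else 0.

Definition sepadd (f g : fn) : fn := fun sh =>
  ereal_inf [set x | exists h1 h2, hsplit sh.2 h1 h2 /\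
                                   x = f (sh.1, h1) + g (sh.1, h2)].
Definition sepwand (f g : fn) : fn := fun sh =>
  ereal_sup [set x | exists h' hh, hdisj h' sh.2 /\ hsplit hh sh.2 h' /\
                                   x = tsub (g (sh.1, hh)) (f (sh.1, h'))].

Definition subst (f : fn) (x : Vars) (e : aexpr) : fn :=
  fun sh => f (upd sh.1 x (e sh.1), sh.2).
Definition substn (f : fn) (x : Vars) (v : nat) : fn :=
  fun sh => f (upd sh.1 x v, sh.2).

Definition tm (e : aexpr) : fn := fun sh =>
  if hemptyb sh.2 then ((e sh.1)%:R)%:E else +oo.
Definition emp : fn := fun sh => if hemptyb sh.2 then 0 else +oo.
Definition pto (l v : nat) : fn := fun sh =>
  if (domf (val sh.2) == [fset l]%fset) && ((val sh.2).[? l]%fmap == Some v)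
  then 0 else +oo.
Definition pto_any (l : nat) : fn := fun sh =>
  if domf (val sh.2) == [fset l]%fset then 0 else +oo.
Definition ptoE (e e' : aexpr) : fn := fun sh => pto (e sh.1) (e' sh.1) sh.
Definition ptoE_any (e : aexpr) : fn := fun sh => pto_any (e sh.1) sh.

Fixpoint sepsum (n : nat) (F : nat -> fn) : fn :=
  match n with
  | 0%N => emp
  | n'.+1 => sepadd (sepsum n' F) (F n'.+1)
  end.
Definition sepsumE (e : aexpr) (F : nat -> fn) : fn :=
  fun sh => sepsum (e sh.1) F sh.

Definition fsup (F : nat -> fn) : fn := fun sh => ereal_sup (range (fun n => F n sh)).
Definition finf (F : nat -> fn) : fn := fun sh => ereal_inf (range (fun n => F n sh)).

Definition lfpT (Phi : fn -> fn) : fn := fun sh =>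
  ereal_inf [set g sh | g in [set g : fn | (forall t, 0 <= g t) /\
                                           (forall t, Phi g t <= g t)]].

Fixpoint ert (C : prog) (f : fn) : fn :=
  match C with
  | Tick e => sepadd (tm e) f
  | Assign x e => subst f x e
  | Alloc x e => fsup (fun v =>
       sepwand (sepsumE e (fun i => pto (v + i - 1) 0)) (substn f x v))
  | Store e e' => sepadd (ptoE_any e) (sepwand (ptoE e e') f)
  | Lookup x e => finf (fun v =>
       sepadd (ptoE e (fun=> v)) (sepwand (ptoE e (fun=> v)) (substn f x v)))
  | Free e => sepadd (ptoE_any e) f
  | PChoice C1 p C2 => fun sh =>
       (ratr (val (p sh.1)))%:E * ert C1 f sh
       + (1 - ratr (val (p sh.1)))%:E * ert C2 f sh
  | Ite phi C1 C2 => fun sh =>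
       iv (phi sh.1) * ert C1 f sh + iv (~~ phi sh.1) * ert C2 f sh
  | Seq C1 C2 => ert C1 (ert C2 f)
  | While phi C' => lfpT (fun g sh =>
       iv (~~ phi sh.1) * f sh + iv (phi sh.1) * ert C' g sh)
  end.

Variable pi : state -> R.

Definition inA (X : fn) : Prop := forall t, - (pi t)%:E <= X t.

Definition lfpA (Phi : fn -> fn) : fn := fun sh =>
  ereal_inf [set Y sh | Y in [set Y : fn | inA Y /\
                                           (forall t, Phi Y t <= Y t)]].

Definition aert_atomic (C : prog) (X : fn) : fn := fun sh =>
  ert C (fun t => X t + (pi t)%:E) sh - (pi sh)%:E.

Fixpoint aert (C : prog) (X : fn) : fn :=
  match C with
  | Tick e => fun sh => ((e sh.1)%:R)%:E + X sh
  | Assign _ _ | Alloc _ _ | Store _ _ | Lookup _ _ | Free _ => aert_atomic C X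
  | PChoice C1 p C2 => fun sh =>
       (ratr (val (p sh.1)))%:E * aert C1 X sh
       + (1 - ratr (val (p sh.1)))%:E * aert C2 X sh
  | Ite phi C1 C2 => fun sh =>
       iv (phi sh.1) * aert C1 X sh + iv (~~ phi sh.1) * aert C2 X sh
  | Seq C1 C2 => aert C1 (aert C2 X)
  | While phi C' => lfpA (fun Y sh =>
       iv (~~ phi sh.1) * X sh + iv (phi sh.1) * aert C' Y sh)
  end.

End Semantics.

(* Main.v *)
Require Import Defs.
From HB Require Import structures.
From mathcomp Require Import all_boot all_order all_algebra.
From mathcomp Require Import finmap.
From mathcomp Require Import all_classical all_reals ereal.
From mathcomp Require Import topology normedtype sequences.
Import Order.TTheory GRing.Theory Num.Theory.
Local Open Scope classical_set_scope.
Local Open Scope ereal_scope.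

Section Gen.
Context {R : realType}.
Implicit Types (u a b : nat -> \bar R).

Lemma esup_ub u n : u n <= ereal_sup (range u).
Proof. by apply: ereal_sup_ubound; exists n. Qed.

Lemma esup_le u y : (forall n, u n <= y) -> ereal_sup (range u) <= y.
Proof. by move=> H; apply/ereal_supP => _ [n _ <-]. Qed.

Lemma esup_addc u (c : R) :
  ereal_sup (range u) + c%:E = ereal_sup (range (fun n => u n + c%:E)).
Proof.
apply/le_anti/andP; split.
- rewrite -leeBrDr //; apply: esup_le => n; rewrite leeBrDr //.
  exact: (esup_ub (fun n => u n + c%:E)).
- by apply: esup_le => n; apply: leeD2r; exact: esup_ub.
Qed.

Lemma esup_cst (c : \bar R) : ereal_sup (range (fun _ : nat => c)) = c.
Proof. by apply/le_anti/andP; split; [apply: esup_le | apply: (esup_ub (fun _ => c) 0)]. Qed.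

Lemma esup_sum a b : (forall n, a n <= a n.+1) -> (forall n, b n <= b n.+1) ->
  (forall n, -oo < a n) -> (forall n, -oo < b n) ->
  ereal_sup (range a) + ereal_sup (range b) = ereal_sup (range (fun n => a n + b n)).
Proof.
move=> ha hb la lb.
have nda : nondecreasing_seq a by apply/nondecreasing_seqP.
have ndb : nondecreasing_seq b by apply/nondecreasing_seqP.
have ndab : nondecreasing_seq (fun n => a n + b n).
  by apply/nondecreasing_seqP => n; apply: leeD.
have ca := ereal_nondecreasing_cvgn nda.
have cb := ereal_nondecreasing_cvgn ndb.
have cab := ereal_nondecreasing_cvgn ndab.
have def : ereal_sup (range a) +? ereal_sup (range b).
  have := lt_le_trans (la 0%N) (esup_ub a 0%N).
  have := lt_le_trans (lb 0%N) (esup_ub b 0%N).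
  rewrite /adde_def.
  by case: (ereal_sup (range b)) => [y||]; case: (ereal_sup (range a)) => [x||].
have cab' : (fun n => a n + b n) @ \oo --> ereal_sup (range a) + ereal_sup (range b).
  exact: cvgeD def ca cb.
rewrite -(cvg_lim (@ereal_hausdorff R) cab') -(cvg_lim (@ereal_hausdorff R) cab).
by [].
Qed.

Lemma esup_exch (F : nat -> nat -> \bar R) :
  ereal_sup (range (fun k => ereal_sup (range (F k)))) =
  ereal_sup (range (fun n => ereal_sup (range (fun k => F k n)))).
Proof.
apply/le_anti/andP; split; apply: esup_le => i; apply: esup_le => j.
- exact: le_trans (esup_ub (fun k => F k j) i) (esup_ub _ j).
- exact: le_trans (esup_ub (F j) i) (esup_ub _ j).
Qed.

End Gen.

Set Implicit Arguments.
Unset Strict Implicit.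
Section Heap.

Lemma hsplit_fnd1 (h h1 h2 : heap) : hsplit h h1 h2 -> forall k,
  (val h1).[? k]%fmap = if k \in domf (val h1) then (val h).[? k]%fmap else None.
Proof.
move=> [hd he] k; case: ifP => kin; last by rewrite not_fnd // kin.
by rewrite he fnd_cat (negbTE (hd k kin)).
Qed.

Lemma hsplit_fnd2 (h h1 h2 : heap) : hsplit h h1 h2 -> forall k,
  (val h2).[? k]%fmap = if k \in domf (val h1) then None else (val h).[? k]%fmap.
Proof.
move=> [hd he] k; case: ifP => kin.
  by rewrite not_fnd // (hd k kin).
rewrite he fnd_cat; case: ifP => // k2.
by rewrite !not_fnd ?kin ?k2.
Qed.

Lemma heap_eq (h1 h2 : heap) : val h1 = val h2 -> h1 = h2.
Proof. exact: val_inj. Qed.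

Lemma hsplit_uniq (h h1 h2 h1' h2' : heap) : hsplit h h1 h2 -> hsplit h h1' h2' ->
  domf (val h1) = domf (val h1') -> h1 = h1' /\ h2 = h2'.
Proof.
move=> s s' d; split; apply: heap_eq; apply/fmapP => k.
- by rewrite (hsplit_fnd1 s) (hsplit_fnd1 s') d.
- by rewrite (hsplit_fnd2 s) (hsplit_fnd2 s') d.
Qed.

Lemma hsplit_fnd_in (h h1 h2 : heap) k : hsplit h h1 h2 -> k \in domf (val h1) ->
  (val h).[? k]%fmap = (val h1).[? k]%fmap.
Proof. by move=> s kin; rewrite (hsplit_fnd1 s) kin. Qed.

Lemma hemp_prop : (0%N \notin domf ([fmap] : {fmap nat -> nat})%fmap).
Proof. by []. Qed.
Definition hemp : heap := exist _ [fmap]%fmap hemp_prop.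

Lemma hsplit_emp (h : heap) : hsplit h h hemp.
Proof. by split; [move=> l _ | rewrite /= catf0]. Qed.
Lemma hdisj_emp (h : heap) : hdisj hemp h.
Proof. by move=> l. Qed.

End Heap.

Section Ert.
Context {R : realType} {Vars : finType}.
Local Notation fn := (fn R Vars).
Definition nonneg (f : fn) := forall t, 0 <= f t.

Lemma esup_eq (u v : nat -> \bar R) : (forall n, u n = v n) ->
  ereal_sup (range u) = ereal_sup (range v).
Proof. by move=> H; rewrite (funext H). Qed.

Lemma tsub_ge0 (a b : \bar R) : 0 <= tsub a b.
Proof. by rewrite /tsub; case: ifP => _ //; rewrite le_max lexx orbT. Qed.

Lemma tsub_sup (a : nat -> \bar R) b : (forall n, 0 <= a n) ->
  tsub (ereal_sup (range a)) b = ereal_sup (range (fun n => tsub (a n) b)).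
Proof.
move=> a0; rewrite /tsub; case: ifP => bi; first by rewrite esup_cst.
apply/le_anti/andP; split; last first.
  apply: esup_le => n; rewrite ge_max; apply/andP; split; rewrite le_max ?lexx ?orbT //.
  by rewrite leeD2r ?orTb // esup_ub.
rewrite ge_max; apply/andP; split; last first.
  by apply: le_trans (esup_ub _ 0%N); rewrite le_max lexx orbT.
move: bi; case: b => [r||] // _.
- rewrite leeBlDr //; apply: esup_le => n; rewrite -leeBlDr //.
  by apply: le_trans (esup_ub _ n); rewrite le_max lexx.
- have A0 : ereal_sup (range a) != -oo.
    by apply/eqP => H; have := le_trans (a0 0%N) (esup_ub a 0%N); rewrite H.
  have a00 : a 0%N != -oo by apply/eqP => H; have := a0 0%N; rewrite H.
  have -> : ereal_sup (range a) - -oo = +oo by rewrite /= addey.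
  apply: le_trans (esup_ub _ 0%N); rewrite le_max; apply/orP; left.
  by rewrite /= addey.
Qed.

Lemma sepwand_ge0 (g f : fn) : nonneg (sepwand g f).
Proof.
move=> [s h]; apply: le_ereal_sup_tmp.
exists (tsub (f (s, h)) (g (s, hemp))); last exact: tsub_ge0.
by exists hemp, h; split; [exact: hdisj_emp | split; [exact: hsplit_emp|]].
Qed.

Lemma sepwand_sup (g : fn) (F : nat -> fn) : (forall n, nonneg (F n)) ->
  sepwand g (fsup F) = fsup (fun n => sepwand g (F n)).
Proof.
move=> F0; apply: funext => -[s h]; rewrite /sepwand /fsup /=.
apply/le_anti/andP; split.
- apply/ereal_supP => _ [h' [hh [hd [hs ->]]]].
  rewrite tsub_sup; last by move=> n; exact: F0.
  apply: esup_le => n; apply: le_trans (esup_ub _ n).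
  by apply: ereal_sup_ubound; exists h', hh.
- apply: esup_le => n; apply/ereal_supP => _ [h' [hh [hd [hs ->]]]].
  apply: le_trans (ereal_sup_ubound _); last first.
    by exists h', hh; split; [exact: hd|split; [exact: hs|reflexivity]].
  rewrite tsub_sup; last by move=> m; exact: F0.
  exact: (esup_ub (fun m => tsub (F m (s, hh)) (g (s, h')))).
Qed.

Lemma sepadd_ge0 (g f : fn) : nonneg g -> nonneg f -> nonneg (sepadd g f).
Proof.
move=> g0 f0 [s h]; apply/ereal_infP => _ [h1 [h2 [_ ->]]].
exact: adde_ge0.
Qed.

Definition domdet (g : fn) := nonneg g /\ exists D : stack Vars -> {fset nat},
  forall s h1, g (s, h1) != +oo -> domf (val h1) = D s.

Lemma sepadd_cases (g : fn) : domdet g -> forall s h,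
  (exists h1 h2, hsplit h h1 h2 /\ g (s, h1) != +oo /\
     forall f, nonneg f -> sepadd g f (s, h) = g (s, h1) + f (s, h2)) \/
  (forall f, nonneg f -> sepadd g f (s, h) = +oo).
Proof.
move=> [g0 [D HD]] s h.
have [[h1 [h2 [hs gf]]]|N] := pselect (exists h1 h2, hsplit h h1 h2 /\ g (s, h1) != +oo).
- left; exists h1; exists h2; split; first by []. split; first by []. move=> f f0; rewrite /sepadd /=.
  apply/le_anti/andP; split.
    by apply: ereal_inf_lbound; exists h1, h2.
  apply/ereal_infP => _ [h1' [h2' [hs' ->]]].
  have [gi|gf'] := eqVneq (g (s, h1')) +oo.
    rewrite gi addye ?leey //; apply/eqP => H; have := f0 (s, h2'); rewrite H.
    by [].
  have [<- <-] := hsplit_uniq hs hs' (etrans (HD _ _ gf) (esym (HD _ _ gf'))).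
  by [].
- right => f f0; apply/ereal_inf_pinfty => _ [h1 [h2 [hs ->]]].
  have gi : g (s, h1) = +oo.
    by apply/eqP; apply/negPn/negP => gf; apply: N; exists h1, h2.
  rewrite gi addye //; apply/eqP => H; have := f0 (s, h2); rewrite H.
  by [].
Qed.

Lemma sepadd_sup (g : fn) (F : nat -> fn) : domdet g -> (forall n, nonneg (F n)) ->
  sepadd g (fsup F) = fsup (fun n => sepadd g (F n)).
Proof.
move=> gd F0.
have fs0 : nonneg (fsup F) by move=> t; apply: le_trans (esup_ub _ 0%N); exact: F0.
apply: funext => -[s h]; rewrite {2}/fsup.
case: (sepadd_cases gd s h) => [[h1 [h2 [_ [gf E]]]]|E].
- rewrite E // (esup_eq (fun n => E _ (F0 n))) /fsup /=.
  have : 0 <= g (s, h1) by case: gd => g0 _; exact: g0.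
  move: gf; case: (g (s, h1)) => [r||] // _ _.
  by rewrite addeC esup_addc; apply: esup_eq => n; rewrite addeC.
- by rewrite E // (esup_eq (fun n => E _ (F0 n))) esup_cst.
Qed.

End Ert.

Section Atomic.
Context {R : realType} {Vars : finType}.
Local Notation fn := (fn R Vars).

Lemma domdet_any (e : aexpr Vars) : domdet (ptoE_any R e).
Proof.
split; first by move=> t; rewrite /ptoE_any /pto_any; case: ifP.
exists (fun s => [fset e s]%fset) => s h1; rewrite /ptoE_any /pto_any /=.
by case: ifP => // /eqP.
Qed.

Lemma domdet_pto (e e' : aexpr Vars) : domdet (ptoE R e e').
Proof.
split; first by move=> t; rewrite /ptoE /pto; case: ifP.
exists (fun s => [fset e s]%fset) => s h1; rewrite /ptoE /pto /=.
by case: ifP => // /andP[/eqP].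
Qed.

Lemma finf_single (G : nat -> \bar R) v0 : (forall v, v != v0 -> G v = +oo) ->
  ereal_inf (range G) = G v0.
Proof.
move=> H; apply/le_anti/andP; split; first by apply: ereal_inf_lbound; exists v0.
apply/ereal_infP => _ [v _ <-]; have [->|nv] := eqVneq v v0; first exact: lexx.
by rewrite (H v nv) leey.
Qed.

Lemma lookup_single (e : aexpr Vars) (W : nat -> fn) s h :
  (forall v, nonneg (W v)) ->
  finf (fun v => sepadd (ptoE R e (fun=> v)) (W v)) (s, h) =
  sepadd (ptoE R e (fun=> odflt 0%N (val h).[? e s]%fmap)) (W (odflt 0%N (val h).[? e s]%fmap)) (s, h).
Proof.
move=> W0; rewrite /finf; apply: (finf_single (G := fun v => sepadd _ (W v) (s, h))) => v nv.
case: (sepadd_cases (domdet_pto e (fun=> v)) s h) => [[h1 [h2 [hs [gf _]]]]|E]; last exact: E.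
exfalso; move: gf; rewrite /ptoE /pto /=.
case: ifP => // /andP[/eqP d /eqP f1] _.
have ein : e s \in domf (val h1) by rewrite d inE.
move: nv; rewrite (hsplit_fnd_in hs ein) f1 /=.
by rewrite eqxx.
Qed.

Definition atomic_ok (C : prog Vars) :=
  (forall f : fn, nonneg f -> nonneg (ert C f)) /\
  (forall F : nat -> fn, (forall n, nonneg (F n)) ->
     ert C (fsup F) = fsup (fun n => ert C (F n))).

Lemma assign_ok x e : atomic_ok (Assign x e).
Proof. by split => [f f0 t|F F0]; [exact: f0|]. Qed.

Lemma free_ok e : atomic_ok (Free e).
Proof.
split => [f f0|F F0] /=.
  by apply: sepadd_ge0 => //; case: (domdet_any e).
exact: sepadd_sup (domdet_any e) F0.
Qed.

Lemma store_ok e e' : atomic_ok (Store e e').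
Proof.
split => [f f0|F F0] /=.
  by apply: sepadd_ge0; [case: (domdet_any e)|exact: sepwand_ge0].
rewrite sepwand_sup //.
apply: sepadd_sup; first exact: domdet_any.
move=> n; exact: sepwand_ge0.
Qed.

Lemma alloc_ok x e : atomic_ok (Alloc x e).
Proof.
split => [f f0|F F0] /=.
  move=> t; apply: le_trans (esup_ub _ 0%N); exact: sepwand_ge0.
apply: funext => sh; rewrite /fsup.
rewrite (esup_eq (v := fun v => ereal_sup (range (fun n =>
   sepwand (sepsumE e (fun i => pto R (Vars:=Vars) (v + i - 1) 0)) (substn (F n) x v) sh)))).
  exact: esup_exch.
move=> v.
have -> : substn (fsup F) x v = fsup (fun n => substn (F n) x v) by [].
by rewrite sepwand_sup // => n t; exact: F0.
Qed.

Lemma lookup_ok x e : atomic_ok (Lookup x e).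
Proof.
split => [f f0|F F0] /=.
  move=> t; apply/ereal_infP => _ [v _ <-]; apply: sepadd_ge0.
    by case: (domdet_pto e (fun=> v)).
  exact: sepwand_ge0.
apply: funext => -[s h]; rewrite lookup_single; last by move=> v; exact: sepwand_ge0.
have -> : forall v, substn (fsup F) x v = fsup (fun n => substn (F n) x v) by [].
rewrite sepwand_sup; last by move=> n t; exact: F0.
rewrite sepadd_sup; first last.
- by move=> n; exact: sepwand_ge0.
- exact: domdet_pto.
rewrite /fsup; apply: esup_eq => n.
by rewrite lookup_single //; move=> v; exact: sepwand_ge0.
Qed.

End Atomic.

Section Amort.
Context {R : realType} {Vars : finType}.
Local Notation fn := (fn R Vars).
Variable pi : state Vars -> R.
Hypothesis pi_ge0 : forall t, (0 <= pi t)%R.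

Definition chainA (X : nat -> fn) :=
  (forall n, inA pi (X n)) /\ (forall n t, X n t <= X n.+1 t).
Definition cont_on (F : fn -> fn) :=
  forall X, chainA X -> F (fsup X) = fsup (fun n => F (X n)).
Definition mono_on (F : fn -> fn) := forall X Y, inA pi X -> inA pi Y ->
  (forall t, X t <= Y t) -> forall t, F X t <= F Y t.
Definition good (F : fn -> fn) := (forall X, inA pi X -> inA pi (F X)) /\ cont_on F.

Lemma good_mono F : good F -> mono_on F.
Proof.
move=> [FA Fc] X Y XA YA XY t.
pose Z := fun n : nat => if n is 0%N then X else Y.
have cZ : chainA Z by split; [case | case => [|n] t' /=].
have fZ : fsup Z = Y.
  apply: funext => t'; apply/le_anti/andP; split.
    by apply: esup_le => -[|n] /=.
  exact: (esup_ub (fun n => Z n t') 1%N).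
have := Fc Z cZ; rewrite fZ => ->.
exact: (esup_ub (fun n => F (Z n) t) 0%N).
Qed.

Lemma fsup_inA (X : nat -> fn) : (forall n, inA pi (X n)) -> inA pi (fsup X).
Proof. by move=> XA t; apply: le_trans (esup_ub _ 0%N); exact: XA. Qed.

Lemma atomic_good C : atomic_ok (R:=R) C -> good (aert_atomic pi C).
Proof.
move=> [C0 Cc]; split.
  move=> X XA t; rewrite /aert_atomic -[X in X <= _]sub0e; apply: leeD2r; apply: C0 => t'.
  by rewrite -leeBlDr // sub0e; exact: XA.
move=> X [XA Xc].
have F0 : forall n, nonneg (fun t => X n t + (pi t)%:E).
  by move=> n t; rewrite -leeBlDr // sub0e; exact: XA.
rewrite /aert_atomic.
have -> : (fun t => fsup X t + (pi t)%:E) = fsup (fun n t => X n t + (pi t)%:E).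
  by apply: funext => t; rewrite /fsup esup_addc.
rewrite (Cc _ F0); apply: funext => sh.
by rewrite -EFinN /fsup esup_addc; apply: esup_eq => n; rewrite EFinN.
Qed.

Lemma tick_good (e : aexpr Vars) : good (fun X sh => ((e sh.1)%:R)%:E + X sh).
Proof.
split.
  move=> X XA t; apply: le_trans (XA t) _; apply: leeDr.
  by rewrite lee_fin ler0n.
move=> X _; apply: funext => sh; rewrite /fsup.
by rewrite addeC esup_addc; apply: esup_eq => n; rewrite addeC.
Qed.

Lemma lb_mul (r c : R) (x : \bar R) : (0 <= r)%R -> c%:E <= x -> -oo < r%:E * x.
Proof.
move=> r0 cx; apply: lt_le_trans (ltNyr (r * c)) _.
by rewrite EFinM; apply: lee_wpmul2l => //; rewrite lee_fin.
Qed.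

Lemma esup_scale (r : R) (u : nat -> \bar R) : (0 <= r)%R ->
  r%:E * ereal_sup (range u) = ereal_sup (range (fun n => r%:E * u n)).
Proof.
move=> r0; rewrite -ereal_supZl //; last by apply/set0P; exists (u 0%N); exists 0%N.
by rewrite image_comp.
Qed.

Lemma pchoice_good F1 F2 (p : pexpr Vars) : good F1 -> good F2 ->
  good (fun X sh => (ratr (val (p sh.1)))%:E * F1 X sh
                  + (1 - ratr (val (p sh.1)))%:E * F2 X sh).
Proof.
move=> G1 G2; have M1 := good_mono G1; have M2 := good_mono G2.
case: G1 => A1 c1; case: G2 => A2 c2.
have pb : forall s, (0 <= ratr (val (p s)) :> R)%R /\ (0 <= 1 - ratr (val (p s)) :> R)%R.
  move=> s; have /andP[q0 q1] := valP (p s); split; first by rewrite ler0q.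
  by rewrite subr_ge0 -(rmorph1 (@ratr R)) ler_rat.
split.
  move=> X XA t; case: (pb t.1) => p0 p1.
  have -> : - (pi t)%:E = (ratr (val (p t.1)))%:E * (- pi t)%:E
                        + (1 - ratr (val (p t.1)))%:E * (- pi t)%:E.
    by rewrite -!EFinM -EFinD -mulrDl addrC subrK mul1r.
  by apply: leeD; apply: lee_wpmul2l; rewrite ?lee_fin // EFinN; [exact: A1|exact: A2].
move=> X [XA Xc]; apply: funext => sh; case: (pb sh.1) => p0 p1.
have C1 : chainA (fun n => F1 (X n)).
  by split => [n|n t]; [exact: A1|apply: M1 => //; exact: A1].
have C2 : chainA (fun n => F2 (X n)).
  by split => [n|n t]; [exact: A2|apply: M2 => //; exact: A2].
rewrite c1 // c2 // /fsup !esup_scale //.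
apply: esup_sum.
- by move=> n; apply: lee_wpmul2l; rewrite ?lee_fin //; case: C1 => _; apply.
- by move=> n; apply: lee_wpmul2l; rewrite ?lee_fin //; case: C2 => _; apply.
- move=> n; apply: (lb_mul (c := - pi sh)) => //; rewrite EFinN; case: C1 => + _; apply.
- move=> n; apply: (lb_mul (c := - pi sh)) => //; rewrite EFinN; case: C2 => + _; apply.
Qed.

Lemma ite_good F1 F2 (phi : bexpr Vars) : good F1 -> good F2 ->
  good (fun X sh => iv R (phi sh.1) * F1 X sh + iv R (~~ phi sh.1) * F2 X sh).
Proof.
move=> [A1 c1] [A2 c2]; split.
  move=> X XA t; case: (phi t.1); rewrite /iv /= ?mul1e ?mul0e ?adde0 ?add0e.
  exact: A1. exact: A2.
move=> X cX; apply: funext => sh; rewrite c1 // c2 // /fsup.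
case: (phi sh.1); rewrite /iv /=.
  by rewrite mul1e mul0e adde0; apply: esup_eq => n; rewrite mul1e mul0e adde0.
by rewrite mul1e mul0e add0e; apply: esup_eq => n; rewrite mul1e mul0e add0e.
Qed.

Lemma seq_good F1 F2 : good F1 -> good F2 -> good (fun X => F1 (F2 X)).
Proof.
move=> G1 [A2 c2]; have M2 := good_mono (conj A2 c2); case: G1 => A1 c1.
split; first by move=> X XA; apply: A1; apply: A2.
move=> X [XA Xc]; rewrite c2 //; apply: c1.
by split => [n|n t]; [exact: A2|apply: M2 => //; exact: A2].
Qed.

End Amort.

Section While.
Context {R : realType} {Vars : finType}.
Local Notation fn := (fn R Vars).
Variable pi : state Vars -> R.

Fixpoint kit (Phi : fn -> fn) (k : nat) : fn :=
  if k is k'.+1 then Phi (kit Phi k') else (fun t => - (pi t)%:E).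

Lemma kit_inA Phi : (forall X, inA pi X -> inA pi (Phi X)) -> forall k, inA pi (kit Phi k).
Proof. by move=> PA; elim => [|k IH] /=; [move=> t; exact: lexx | exact: PA]. Qed.

Lemma kleene Phi : good pi Phi -> lfpA pi Phi = fsup (kit Phi).
Proof.
move=> G; have M := good_mono G; case: G => PA Pc.
have KA := kit_inA PA.
have Kc : forall k t, kit Phi k t <= kit Phi k.+1 t.
  elim => [|k IH] t /=; first exact: (KA 1%N t).
  by apply: M; [exact: KA | exact: (KA k.+1) | exact: IH].
have CK : chainA pi (kit Phi) by split.
have YA : inA pi (fsup (kit Phi)) := fsup_inA KA.
have Yp : forall t, Phi (fsup (kit Phi)) t <= fsup (kit Phi) t.
  rewrite (Pc _ CK) => t; apply: esup_le => n.
  exact: (esup_ub (fun k => kit Phi k t) n.+1).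
apply: funext => sh; apply/le_anti/andP; split.
  by apply: ereal_inf_lbound; exists (fsup (kit Phi)).
apply/ereal_infP => _ [Y [YA' Yp'] <-]; apply: esup_le => k.
elim: k sh => [|k IH] t /=; first exact: YA'.
apply: le_trans (Yp' t); apply: M => //; exact: KA.
Qed.

Definition PhiW (phi : bexpr Vars) (F : fn -> fn) (X : fn) : fn -> fn :=
  fun Y sh => iv R (~~ phi sh.1) * X sh + iv R (phi sh.1) * F Y sh.

Lemma PhiW_good phi F X : good pi F -> inA pi X -> good pi (PhiW phi F X).
Proof.
move=> [FA Fc] XA; split.
  move=> Y YA t; rewrite /PhiW; case: (phi t.1); rewrite /iv /= ?mul1e ?mul0e ?adde0 ?add0e.
  exact: FA. exact: XA.
move=> Y cY; apply: funext => sh; rewrite /PhiW Fc // /fsup.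
case: (phi sh.1); rewrite /iv /=.
  by rewrite mul1e mul0e add0e; apply: esup_eq => n; rewrite ?mul1e ?mul0e ?add0e.
rewrite mul1e mul0e adde0.
transitivity (ereal_sup (range (fun _ : nat => X sh))); first by rewrite esup_cst.
by apply: esup_eq => n; rewrite ?mul1e ?mul0e ?adde0.
Qed.

Lemma while_good phi F : good pi F -> good pi (fun X => lfpA pi (PhiW phi F X)).
Proof.
move=> G; have M := good_mono G.
have GX : forall X, inA pi X -> good pi (PhiW phi F X) by move=> X XA; exact: PhiW_good.
split.
  move=> X XA; rewrite kleene; last exact: GX.
  apply: fsup_inA; apply: kit_inA; case: (GX X XA) => //.
move=> X [XA Xc].
have XSA : inA pi (fsup X) := fsup_inA XA.
have KA : forall X, inA pi X -> forall k, inA pi (kit (PhiW phi F X) k).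
  by move=> X' XA'; apply: kit_inA; case: (GX X' XA').
have KM : forall X X', inA pi X -> inA pi X' -> (forall t, X t <= X' t) ->
    forall k t, kit (PhiW phi F X) k t <= kit (PhiW phi F X') k t.
  move=> X1 X2 A1 A2 X12; elim => [|k IH] t /=; first exact: lexx.
  rewrite /PhiW; case: (phi t.1); rewrite /iv /= ?mul1e ?mul0e ?adde0 ?add0e.
    by apply: M => //; exact: KA.
  exact: X12.
have K : forall k, kit (PhiW phi F (fsup X)) k = fsup (fun n => kit (PhiW phi F (X n)) k).
  elim => [|k IH] /=.
    by apply: funext => t; rewrite /fsup esup_cst.
  rewrite IH; apply: funext => sh; rewrite /PhiW.
  have cZ : chainA pi (fun n => kit (PhiW phi F (X n)) k).
    split => [n|n t]; first exact: KA.
    by apply: KM => //; exact: Xc.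
  case: G => FA Fc; rewrite Fc // /fsup.
  case: (phi sh.1); rewrite /iv /=.
    by rewrite mul1e mul0e add0e; apply: esup_eq => n; rewrite ?mul1e ?mul0e ?add0e.
  by rewrite mul1e mul0e adde0; apply: esup_eq => n; rewrite ?mul1e ?mul0e ?adde0.
rewrite kleene; last exact: GX.
have -> : (fun n => lfpA pi (PhiW phi F (X n))) = fun n => fsup (kit (PhiW phi F (X n))).
  by apply: funext => n; rewrite kleene //; exact: GX.
apply: funext => sh; rewrite /fsup.
rewrite (esup_eq (v := fun k => ereal_sup (range (fun n => kit (PhiW phi F (X n)) k sh)))).
  by rewrite esup_exch.
by move=> k; rewrite K.
Qed.

End While.

Unset Implicit Arguments.
Set Strict Implicit.

Lemma all_good (R : realType) (Vars : finType) (pi : state Vars -> R) (C : prog Vars) :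
  good pi (aert pi C).
Proof.
elim: C => [e|x e|x e|e e'|x e|e|C1 IH1 p C2 IH2|phi C1 IH1 C2 IH2|C1 IH1 C2 IH2|phi C IH] /=.
- exact: tick_good.
- exact: atomic_good (assign_ok x e).
- exact: atomic_good (alloc_ok x e).
- exact: atomic_good (store_ok e e').
- exact: atomic_good (lookup_ok x e).
- exact: atomic_good (free_ok e).
- exact: pchoice_good.
- exact: ite_good.
- exact: seq_good.
- exact: (while_good phi IH).
Qed.

Theorem mainTheorem3 (R : realType) (Vars : finType)
  (pi : state Vars -> R) (pi_ge0 : forall t, (0 <= pi t)%R)
  (C : prog Vars) (X : nat -> fn R Vars)
  (XA : forall n, inA pi (X n))
  (Xchain : forall n t, X n t <= X n.+1 t) :
  aert pi C (fsup X) = fsup (fun n => aert pi C (X n)).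
Proof.
by case: (@all_good R Vars pi C) => _ c; apply: c; split.
Qed.
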